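(* Let $Q$ be a quiver and suppose $(kQ,\Delta,\varepsilon,\mathrm{M},\mu,\Phi,\mathcal S,\alpha,\beta)$ is a graded Majid algebra structure on the path coalgebra $kQ$. Then $\mathrm{M}(Q_0\otimes Q_0)\subseteq Q_0$, and $Q_0$ with the binary operation $(g,h)\mapsto gh=\mathrm{M}(g\otimes h)$ is a group $G$ with identity $1$ and inverse $g^{-1}=\mathcal S(g)$. Moreover, writing $M=kQ_1$ and ${}^gM^h$ for the span of arrows with source $h$ and target $g$, for all $f,g,h\in G$ one has $f.\,{}^gM^h={}^{fg}M^{fh}$ and ${}^gM^h.f={}^{gf}M^{hf}$ (where $f.m=\mathrm{M}(f\otimes m)$, $m.f=\mathrm{M}(m\otimes f)$), and for $e,f,g,h\in G$, $m\in{}^gM^h$: $e.(f.m)=\frac{\Phi(e,f,g)}{\Phi(e,f,h)}(ef).m$, $(m.e).f=\frac{\Phi(h,e,f)}{\Phi(g,e,f)}m.(ef)$, $(e.m).f=\frac{\Phi(e,h,f)}{\Phi(e,g,f)}e.(m.f)$. In particular the number of arrows from $x$ to $g^{-1}cgx$ equals the number of arrows from $1$ to $c$, for all $x,g,c\in G$.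
   Context: A Majid algebra (dual quasi-Hopf algebra) over $k$ is a coalgebra $(H,\Delta,\varepsilon)$ (Sweedler notation $\Delta(a)=a_1\otimes a_2$) together with coalgebra maps $\mathrm{M}:H\otimes H\to H$, $a\otimes b\mapsto ab$, and $\mu:k\to H$, $\lambda\mapsto\lambda 1_H$, a convolution-invertible linear map $\Phi:H^{\otimes 3}\to k$ (the reassociator), a coalgebra antimorphism $\mathcal S:H\to H$ and linear maps $\alpha,\beta:H\to k$ such that for all $a,b,c,d\in H$: (i) $a_1(b_1c_1)\Phi(a_2,b_2,c_2)=\Phi(a_1,b_1,c_1)(a_2b_2)c_2$; (ii) $1_Ha=a=a1_H$; (iii) $\Phi(a_1,b_1,c_1d_1)\Phi(a_2b_2,c_2,d_2)=\Phi(b_1,c_1,d_1)\Phi(a_1,b_2c_2,d_2)\Phi(a_2,b_3,c_3)$; (iv) $\Phi(a,1_H,b)=\varepsilon(a)\varepsilon(b)$; (v) $\mathcal S(a_1)\alpha(a_2)a_3=\alpha(a)1_H$ and $a_1\beta(a_2)\mathcal S(a_3)=\beta(a)1_H$; (vi) $\Phi(a_1,\mathcal S(a_3),a_5)\beta(a_2)\alpha(a_4)=\Phi^{-1}(\mathcal S(a_1),a_3,\mathcal S(a_5))\alpha(a_2)\beta(a_4)=\varepsilon(a)$. A quiver $Q=(Q_0,Q_1,s,t)$ has vertex set $Q_0$, arrow set $Q_1$, source and target maps $s,t$. Paths of length $n$ form the set $Q_n$ (vertices are paths of length 0). The path coalgebra $kQ$ has basis all paths, with $\Delta(g)=g\otimes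 g$, $\varepsilon(g)=1$ for vertices and, for $p=a_n\cdots a_1$, $\varepsilon(p)=0$, $\Delta(p)=p\otimes s(a_1)+\sum_{i=1}^{n-1}a_n\cdots a_{i+1}\otimes a_i\cdots a_1+t(a_n)\otimes p$; it is graded by length. A graded Majid algebra structure on $kQ$ is a Majid algebra structure on the coalgebra $kQ$ with $\mathrm{M}(kQ_i\otimes kQ_j)\subseteq kQ_{i+j}$, $1\in kQ_0$, $\mathcal S(kQ_n)\subseteq kQ_n$, and $\Phi,\alpha,\beta$ vanishing whenever some homogeneous argument has positive degree. *)

(* Defs.v *)
From HB Require Import structures.
From mathcomp Require Import all_boot all_algebra.
From Stdlib Require Import ClassicalEpsilon.
Set Implicit Arguments. Unset Strict Implicit. Unset Printing Implicit Defensive.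
Import GRing.Theory.
Local Open Scope ring_scope.

(* A raw path is (v, l) with l = [:: a_n; ...; a_1] (written order, a_1 first
   arrow) and v the source vertex; it is valid when consecutive arrows compose
   and s a_1 = v. *)
Definition qpath (V A : eqType) := (V * seq A)%type.

Definition ptgt {V A : eqType} (t : A -> V) (p : qpath V A) : V :=
  if p.2 is a :: _ then t a else p.1.

Fixpoint validl {V A : eqType} (s t : A -> V) (v : V) (l : seq A) : bool :=
  match l with
  | [::] => true
  | a :: l' => (s a == (if l' is b :: _ then t b else v)) && validl s t v l'
  end.

Definition valid {V A : eqType} (s t : A -> V) (p : qpath V A) : bool :=
  validl s t p.1 p.2.

Definition vtx {V A : eqType} (v : V) : qpath V A := (v, [::]).
Definition arr {V A : eqType} (s : A -> V) (a : A) : qpath V A := (s a, [:: a]).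
Definition plen {V A : eqType} (p : qpath V A) : nat := size p.2.

(* Delta(p) = sum over (u, w) in splits p of u (x) w   (u = p_1, w = p_2) *)
Definition splits {V A : eqType} (t : A -> V) (p : qpath V A)
  : seq (qpath V A * qpath V A) :=
  [seq ((ptgt t (p.1, drop i p.2), take i p.2), (p.1, drop i p.2))
  | i <- iota 0 (size p.2).+1].

(* Elements of kQ: finitely supported coefficient functions on valid paths. *)
Definition elt {V A : eqType} {k : fieldType} (s t : A -> V) (x : qpath V A -> k) :=
  (exists sq : seq (qpath V A), forall p, x p != 0 -> p \in sq) /\
  (forall p, x p != 0 -> valid s t p).

Definition sup {V A : eqType} {k : fieldType} (x : qpath V A -> k) : seq (qpath V A) :=
  undup (epsilon (inhabits (@nil (qpath V A)))
                 (fun sq => forall p, x p != 0 -> p \in sq)).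

Definition bas {V A : eqType} {k : fieldType} (p : qpath V A) : qpath V A -> k :=
  fun q => (q == p)%:R.

(* linear extensions of maps given on the basis *)
Definition lin0 {V A : eqType} {k : fieldType} (x : qpath V A -> k) (g : qpath V A -> k) : k :=
  \sum_(p <- sup x) x p * g p.
Definition lin {V A : eqType} {k : fieldType} {T : Type}
  (x : qpath V A -> k) (f : qpath V A -> T -> k) : T -> k :=
  fun q => \sum_(p <- sup x) x p * f p q.

Definition eps {V A : eqType} {k : fieldType} (p : qpath V A) : k := (plen p == 0)%:R.

(* comultiplication of an element, as a coefficient function on basis pairs *)
Definition cop {V A : eqType} {k : fieldType} (t : A -> V) (x : qpath V A -> k)
  : qpath V A * qpath V A -> k :=
  lin x (fun r uv => (count_mem uv (splits t r))%:R).

(* Sweedler sums over basis paths *)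
Definition sw2 {V A : eqType} {k : fieldType} (t : A -> V) (a : qpath V A)
  (F : qpath V A -> qpath V A -> k) : k :=
  \sum_(x <- splits t a) F x.1 x.2.
Definition sw3 {V A : eqType} {k : fieldType} (t : A -> V) (a : qpath V A)
  (F : qpath V A -> qpath V A -> qpath V A -> k) : k :=
  \sum_(x <- splits t a) \sum_(y <- splits t x.2) F x.1 y.1 y.2.
Definition sw5 {V A : eqType} {k : fieldType} (t : A -> V) (a : qpath V A)
  (F : qpath V A -> qpath V A -> qpath V A -> qpath V A -> qpath V A -> k) : k :=
  \sum_(x1 <- splits t a) \sum_(x2 <- splits t x1.2) \sum_(x3 <- splits t x2.2)
    \sum_(x4 <- splits t x3.2) F x1.1 x2.1 x3.1 x4.1 x4.2.

(* Graded Majid algebra structure on kQ, all maps given by their values on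
   basis paths: mul p q = M(p (x) q), one = 1_H, Phi/Phinv the reassociator and
   its convolution inverse, S the antipode, alpha, beta. *)
Record graded_majid {V A : eqType} {k : fieldType} (s t : A -> V)
  (mul : qpath V A -> qpath V A -> qpath V A -> k) (one : qpath V A -> k)
  (Phi Phinv : qpath V A -> qpath V A -> qpath V A -> k)
  (S : qpath V A -> qpath V A -> k) (alpha beta : qpath V A -> k) : Prop := {
  gm_mul_elt : forall p q, valid s t p -> valid s t q -> elt s t (mul p q);
  gm_one_elt : elt s t one;
  gm_S_elt : forall p, valid s t p -> elt s t (S p);
  (* M is a coalgebra map *)
  gm_mul_eps : forall a b, valid s t a -> valid s t b ->
    lin0 (mul a b) eps = eps a * eps b;
  gm_mul_cop : forall a b, valid s t a -> valid s t b -> forall u v,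
    cop t (mul a b) (u, v) =
    sw2 t a (fun a1 a2 => sw2 t b (fun b1 b2 => mul a1 b1 u * mul a2 b2 v));
  (* mu is a coalgebra map *)
  gm_one_eps : lin0 one eps = 1;
  gm_one_cop : forall u v, cop t one (u, v) = one u * one v;
  (* (i) *)
  gm_assoc : forall a b c, valid s t a -> valid s t b -> valid s t c -> forall q,
    sw2 t a (fun a1 a2 => sw2 t b (fun b1 b2 => sw2 t c (fun c1 c2 =>
      lin (mul b1 c1) (fun r => mul a1 r) q * Phi a2 b2 c2))) =
    sw2 t a (fun a1 a2 => sw2 t b (fun b1 b2 => sw2 t c (fun c1 c2 =>
      Phi a1 b1 c1 * lin (mul a2 b2) (fun r => mul r c2) q)));
  (* (ii) *)
  gm_unitl : forall a, valid s t a -> forall q, lin one (fun r => mul r a) q = bas a q;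
  gm_unitr : forall a, valid s t a -> forall q, lin one (fun r => mul a r) q = bas a q;
  (* (iii) *)
  gm_pentagon : forall a b c d, valid s t a -> valid s t b -> valid s t c -> valid s t d ->
    sw2 t a (fun a1 a2 => sw2 t b (fun b1 b2 => sw2 t c (fun c1 c2 => sw2 t d (fun d1 d2 =>
      lin0 (mul c1 d1) (fun r => Phi a1 b1 r) * lin0 (mul a2 b2) (fun r => Phi r c2 d2))))) =
    sw2 t a (fun a1 a2 => sw3 t b (fun b1 b2 b3 => sw3 t c (fun c1 c2 c3 => sw2 t d (fun d1 d2 =>
      Phi b1 c1 d1 * lin0 (mul b2 c2) (fun r => Phi a1 r d2) * Phi a2 b3 c3))));
  (* (iv) *)
  gm_Phi_unit : forall a b, valid s t a -> valid s t b ->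
    lin0 one (fun r => Phi a r b) = eps a * eps b;
  (* Phi is convolution invertible with inverse Phinv *)
  gm_Phi_inv_r : forall a b c, valid s t a -> valid s t b -> valid s t c ->
    sw2 t a (fun a1 a2 => sw2 t b (fun b1 b2 => sw2 t c (fun c1 c2 =>
      Phi a1 b1 c1 * Phinv a2 b2 c2))) = eps a * eps b * eps c;
  gm_Phi_inv_l : forall a b c, valid s t a -> valid s t b -> valid s t c ->
    sw2 t a (fun a1 a2 => sw2 t b (fun b1 b2 => sw2 t c (fun c1 c2 =>
      Phinv a1 b1 c1 * Phi a2 b2 c2))) = eps a * eps b * eps c;
  (* S is a coalgebra antimorphism *)
  gm_S_cop : forall a, valid s t a -> forall u v,
    cop t (S a) (u, v) = sw2 t a (fun a1 a2 => S a2 u * S a1 v);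
  gm_S_eps : forall a, valid s t a -> lin0 (S a) eps = eps a;
  (* (v) *)
  gm_alpha : forall a, valid s t a -> forall q,
    sw3 t a (fun a1 a2 a3 => lin (S a1) (fun r => mul r a3) q * alpha a2) = alpha a * one q;
  gm_beta : forall a, valid s t a -> forall q,
    sw3 t a (fun a1 a2 a3 => lin (S a3) (fun r => mul a1 r) q * beta a2) = beta a * one q;
  (* (vi) *)
  gm_vi1 : forall a, valid s t a ->
    sw5 t a (fun a1 a2 a3 a4 a5 =>
      lin0 (S a3) (fun r => Phi a1 r a5) * beta a2 * alpha a4) = eps a;
  gm_vi2 : forall a, valid s t a ->
    sw5 t a (fun a1 a2 a3 a4 a5 =>
      lin0 (S a1) (fun r => lin0 (S a5) (fun r' => Phinv r a3 r')) * alpha a2 * beta a4)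
    = eps a;
  gm_mul_deg : forall p q, valid s t p -> valid s t q -> forall r,
    mul p q r != 0 -> plen r = (plen p + plen q)%N;
  gm_one_deg : forall r, one r != 0 -> plen r = 0%N;
  gm_S_deg : forall p, valid s t p -> forall r, S p r != 0 -> plen r = plen p;
  gm_Phi_deg : forall p q r, valid s t p -> valid s t q -> valid s t r ->
    [|| (0 < plen p)%N, (0 < plen q)%N | (0 < plen r)%N] -> Phi p q r = 0;
  gm_alpha_deg : forall p, valid s t p -> (0 < plen p)%N -> alpha p = 0;
  gm_beta_deg : forall p, valid s t p -> (0 < plen p)%N -> beta p = 0
}.

Definition inM {V A : eqType} {k : fieldType} (s t : A -> V) (g h : V)
  (m : qpath V A -> k) : Prop :=
  elt s t m /\ forall p, m p != 0 -> exists a, p = arr s a /\ s a = h /\ t a = g.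

(* f.m = M(f (x) m) and m.f = M(m (x) f) *)
Definition lact {V A : eqType} {k : fieldType}
  (mul : qpath V A -> qpath V A -> qpath V A -> k) (f : V) (m : qpath V A -> k)
  : qpath V A -> k := lin m (fun r => mul (vtx f) r).
Definition ract {V A : eqType} {k : fieldType}
  (mul : qpath V A -> qpath V A -> qpath V A -> k) (f : V) (m : qpath V A -> k)
  : qpath V A -> k := lin m (fun r => mul r (vtx f)).

Definition equinum {A : Type} (P1 P2 : A -> Prop) : Prop :=
  exists (f f' : A -> A),
    (forall a, P1 a -> P2 (f a)) /\ (forall b, P2 b -> P1 (f' b)) /\
    (forall a, P1 a -> f' (f a) = a) /\ (forall b, P2 b -> f (f' b) = b).

(* Main.v *)
Require Import Defs.
From HB Require Import structures.
From mathcomp Require Import all_boot all_algebra.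
From Stdlib Require Import ClassicalEpsilon Classical FunctionalExtensionality PropExtensionality.
Set Implicit Arguments. Unset Strict Implicit. Unset Printing Implicit Defensive.
Import GRing.Theory.
Local Open Scope ring_scope.
Local Close Scope ring_scope.

Section Zorn.
Variables (T : Type) (R : T -> T -> Prop).
Hypothesis Rrefl : forall x, R x x.
Hypothesis Rtrans : forall x y z, R x y -> R y z -> R x z.

Definition zchain (c : T -> Prop) := forall x y, c x -> c y -> R x y \/ R y x.
Definition zsub (c1 c2 : T -> Prop) := forall x, c1 x -> c2 x.
Definition zsuper (c c' : T -> Prop) := zchain c' /\ zsub c c' /\ exists x, c' x /\ ~ c x.

Lemma zset_ext (c1 c2 : T -> Prop) : zsub c1 c2 -> zsub c2 c1 -> c1 = c2.
Proof.
move=> h1 h2; apply: functional_extensionality => x.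
apply: propositional_extensionality; split; [exact: h1|exact: h2].
Qed.

Definition zsucc (c : T -> Prop) : T -> Prop :=
  match excluded_middle_informative (exists c', zchain c /\ zsuper c c') with
  | left h => proj1_sig (constructive_indefinite_description _ h)
  | right _ => c end.

Lemma zsucc_spec c : (exists c', zchain c /\ zsuper c c') -> zsuper c (zsucc c).
Proof.
rewrite /zsucc; case: excluded_middle_informative => // h _.
by destruct (constructive_indefinite_description _ h) as [c' [? ?]].
Qed.

Lemma zsucc_sub c : zsub c (zsucc c).
Proof.
rewrite /zsucc; case: excluded_middle_informative => [h|_]; last by [].
by destruct (constructive_indefinite_description _ h) as [c' [? [? [? ?]]]].
Qed.

Lemma zsucc_chain c : zchain c -> zchain (zsucc c).
Proof.
rewrite /zsucc; case: excluded_middle_informative => [h|_]; last by [].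
by destruct (constructive_indefinite_description _ h) as [c' [? [? ?]]].
Qed.

Inductive CC : (T -> Prop) -> Prop :=
| CCsucc c : CC c -> CC (zsucc c)
| CCunion (F : (T -> Prop) -> Prop) : (forall c, F c -> CC c) -> CC (fun x => exists c, F c /\ c x).

Lemma zsub_trans a b c : zsub a b -> zsub b c -> zsub a c.
Proof. by move=> h1 h2 x /h1 /h2. Qed.

Lemma CC_aux c1 c2 : CC c1 ->
  (forall c3, CC c3 -> zsub c3 c2 -> c2 = c3 \/ zsub (zsucc c3) c2) ->
  zsub (zsucc c2) c1 \/ zsub c1 c2.
Proof.
move=> hc1 h; elim: hc1 => {c1} [c3 hc3 IH|F hF IH].
- case: IH => [h1|h1].
    by left; move=> x /h1; apply: zsucc_sub.
  case: (h c3 hc3 h1) => [->|h2].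
    by left => x.
  by right.
- case: (classic (exists c, F c /\ ~ zsub c c2)) => [[c [Fc nc]]|hn].
    case: (IH c Fc) => [h1|//].
    by left => x /h1 cx; exists c.
  right => x [c [Fc cx]].
  case: (classic (zsub c c2)) => [hs|hs]; first exact: hs.
  by case: hn; exists c.
Qed.

Lemma CC_succ_total c1 c2 : CC c1 -> CC c2 -> zsub c1 c2 ->
  c2 = c1 \/ zsub (zsucc c1) c2.
Proof.
move=> hc1 hc2; elim: hc2 c1 hc1 => {c2} [c3 hc3 IH|F hF IH] c1 hc1 h.
- case: (CC_aux hc1 (fun c4 hc4 hs => IH c4 hc4 hs)) => [h1|h1].
    by left; apply: zset_ext.
  case: (IH c1 hc1 h1) => [->|h2]; first by right.
  by right; move=> x /h2; apply: zsucc_sub.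
- case: (classic (zsub (fun x => exists c, F c /\ c x) c1)) => [h1|h1].
    by left; apply: zset_ext.
  case: (classic (zsub (zsucc c1) (fun x => exists c, F c /\ c x))) => [h2|h2]; first by right.
  exfalso.
  have [c3 [Fc3 nc3]] : exists c3, F c3 /\ ~ zsub c3 c1.
    apply: NNPP => hn; apply: h1 => x [c [Fc cx]].
    by apply: NNPP => nx; apply: hn; exists c; split => // hs; apply: nx; apply: hs.
  case: (CC_aux hc1 (fun c4 hc4 hs => IH c3 Fc3 c4 hc4 hs)) => [h3|h3].
    by apply: nc3; apply: zsub_trans h3; apply: zsucc_sub.
  case: (IH c3 Fc3 c1 hc1 h3) => [e|h4].
    by apply: nc3; rewrite e.
  by apply: h2 => x /h4 cx; exists c3.
Qed.

Lemma CC_total c1 c2 : CC c1 -> CC c2 -> zsub c1 c2 \/ zsub c2 c1.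
Proof.
move=> hc1 hc2.
case: (CC_aux hc2 (fun c3 hc3 hs => CC_succ_total hc3 hc1 hs)) => h; last by right.
by left; apply: zsub_trans h; apply: zsucc_sub.
Qed.

Lemma CC_fix c1 c2 : CC c1 -> CC c2 -> zsucc c2 = c2 -> zsub c1 c2.
Proof.
move=> hc1 hc2 e; elim: hc1 => {c1} [c3 hc3 IH|F hF IH].
- case: (CC_succ_total hc3 hc2 IH) => [e'|//]; rewrite -e' e => y //.
- by move=> x [c [Fc cx]]; apply: IH Fc _ cx.
Qed.

Lemma CC_chain c : CC c -> zchain c.
Proof.
elim => {c} [c hc IH|F hF IH]; first exact: zsucc_chain.
move=> x y [c [Fc cx]] [c' [Fc' cy]].
case: (CC_total (hF _ Fc) (hF _ Fc')) => h.
  by apply: (IH c'); [|apply: h|].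
by apply: (IH c); [|exact: cx|apply: h].
Qed.

Definition zmax := fun x => exists c, CC c /\ c x.

Lemma CC_zmax : CC zmax.
Proof. exact: CCunion. Qed.

Lemma zmax_fix : zsucc zmax = zmax.
Proof.
apply: zset_ext; last exact: zsucc_sub.
by move=> x hx; exists (zsucc zmax); split => //; apply: CCsucc; apply: CC_zmax.
Qed.

Theorem zorn : (forall c, zchain c -> exists ub, forall x, c x -> R x ub) ->
  exists m, forall x, R m x -> R x m.
Proof.
move=> hub; have [m hm] := hub _ (CC_chain CC_zmax).
exists m => x hmx.
case: (classic (zmax x)) => [hx|hx]; first exact: hm.
exfalso.
have hs : exists c', zchain zmax /\ zsuper zmax c'.
  exists (fun y => zmax y \/ y = x); split; first exact: CC_chain CC_zmax.
  split; last split; [|by move=> y; left|by exists x; split; [right|]].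
  move=> y z [hy|->] [hz|->].
  - exact: (CC_chain CC_zmax).
  - by left; apply: Rtrans (hm _ hy) hmx.
  - by right; apply: Rtrans (hm _ hz) hmx.
  - by left; apply: Rrefl.
have [_ [_ [y [hy ny]]]] := zsucc_spec hs.
by rewrite zmax_fix in hy.
Qed.
End Zorn.


Definition pb (P : Prop) : bool := if excluded_middle_informative P then true else false.
Lemma pbP (P : Prop) : reflect P (pb P).
Proof. by rewrite /pb; case: excluded_middle_informative => h; constructor. Qed.

Section SB.
Variables (A : Type) (P Q : A -> Prop) (f g : A -> A).
Hypotheses (fPQ : forall a, P a -> Q (f a)) (gQP : forall b, Q b -> P (g b)).
Hypotheses (finj : forall a b, P a -> P b -> f a = f b -> a = b)
           (ginj : forall a b, Q a -> Q b -> g a = g b -> a = b).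

Definition sbC a := exists n a0, P a0 /\ ~ (exists b, Q b /\ g b = a0) /\ a = iter n (g \o f) a0.
Definition inv_of (R : A -> Prop) (h : A -> A) (a : A) : A :=
  match excluded_middle_informative (exists b, R b /\ h b = a) with
  | left e => proj1_sig (constructive_indefinite_description _ e)
  | right _ => a end.
Lemma inv_ofP R h a : (exists b, R b /\ h b = a) -> R (inv_of R h a) /\ h (inv_of R h a) = a.
Proof.
rewrite /inv_of; case: excluded_middle_informative => // e _.
by destruct (constructive_indefinite_description _ e) as [b hb].
Qed.

Lemma iterP n a0 : P a0 -> P (iter n (g \o f) a0).
Proof. by move=> h; elim: n => //= n IH; apply: gQP; apply: fPQ. Qed.

Definition sbh a := if pb (sbC a) then f a else inv_of Q g a.
Definition sbh' b := if pb (sbC (g b)) then inv_of P f b else g b.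

Lemma notC_img a : P a -> ~ sbC a -> exists b, Q b /\ g b = a.
Proof.
move=> Pa nC; apply: NNPP => hn; apply: nC; exists 0, a; split => //.
Qed.

Lemma C_img b : Q b -> sbC (g b) -> exists a, P a /\ f a = b /\ sbC a.
Proof.
move=> Qb [n [a0 [Pa0 [na0 e]]]]; case: n e => [|n] /= e.
  by case: na0; exists b.
have := ginj Qb (fPQ (iterP n Pa0)) e => eb.
exists (iter n (g \o f) a0); split; first exact: iterP.
split; first by rewrite eb.
by exists n, a0.
Qed.

Theorem SB : equinum P Q.
Proof.
exists sbh, sbh'; split; last split; last split.
- move=> a Pa; rewrite /sbh; case: pbP => hC; first exact: fPQ.
  exact: (proj1 (inv_ofP (notC_img Pa hC))).
- move=> b Qb; rewrite /sbh'; case: pbP => hC; last exact: gQP.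
  have [a [Pa [fa _]]] := C_img Qb hC.
  by apply: (proj1 (inv_ofP _)); exists a.
- move=> a Pa; rewrite /sbh; case: pbP => hC.
  + have hC' : sbC (g (f a)).
      by case: hC => n [a0 [? [? e]]]; exists n.+1, a0; rewrite /= -e.
    rewrite /sbh'; case: pbP => // _...
    have [h1 h2] : P (inv_of P f (f a)) /\ f (inv_of P f (f a)) = f a by apply: inv_ofP; exists a.
    exact: finj h1 Pa h2.
  + have [h1 h2] := inv_ofP (notC_img Pa hC).
    rewrite /sbh'; case: pbP => hC'; last by [].
    by rewrite h2 in hC'.
- move=> b Qb; rewrite /sbh'; case: pbP => hC.
  + have [a [Pa [fa Ca]]] := C_img Qb hC.
    have [h1 h2] : P (inv_of P f b) /\ f (inv_of P f b) = b by apply: inv_ofP; exists a.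
    rewrite /sbh; case: pbP => hC2.
      by [].
    exfalso; apply: hC2; have -> : inv_of P f b = a by apply: finj; rewrite ?h2 ?fa.
    exact: Ca.
  + rewrite /sbh; case: pbP => hC2; first by [].
    have [h1 h2] : Q (inv_of Q g (g b)) /\ g (inv_of Q g (g b)) = g b by apply: inv_ofP; exists b.
    exact: ginj h1 Qb h2.
Qed.
End SB.

Lemma pickle_inj2 (x y : nat * nat) : pickle x = pickle y -> x = y.
Proof. exact: (pcan_inj (@pickleK _)). Qed.

Definition pfinite (A : eqType) (P : A -> Prop) := exists l : seq A, forall a, P a -> a \in l.
Section InfSeq.
Variables (A : eqType) (P : A -> Prop).

Section Seq.
Hypothesis H : forall l : seq A, exists a, P a /\ a \notin l.
Definition nxt l := proj1_sig (constructive_indefinite_description _ (H l)).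
Lemma nxtP l : P (nxt l) /\ nxt l \notin l.
Proof. by rewrite /nxt; destruct (constructive_indefinite_description _ (H l)). Qed.
Fixpoint Ls n := if n is n'.+1 then rcons (Ls n') (nxt (Ls n')) else [::].
Lemma Ls_mem m n : m < n -> nxt (Ls m) \in Ls n.
Proof.
elim: n => // n IH; rewrite ltnS leq_eqVlt => /orP [/eqP ->|h] /=;
  rewrite mem_rcons in_cons ?eqxx //.
by rewrite IH ?orbT.
Qed.
End Seq.

Lemma infinite_seq : ~ pfinite P -> exists e : nat -> A, (forall n, P (e n)) /\ (forall m n, e m = e n -> m = n).
Proof.
move=> nf.
have H : forall l : seq A, exists a, P a /\ a \notin l.
  move=> l; apply: NNPP => hn; apply: nf; exists l => a Pa.
  by apply: NNPP => na; apply: hn; exists a; split => //; apply/negP.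
exists (fun n => nxt H (Ls H n)); split; first by move=> n; case: (nxtP H (Ls H n)).
have key : forall m n, m < n -> nxt H (Ls H m) <> nxt H (Ls H n).
  move=> m n hmn e; have := Ls_mem H hmn; rewrite e.
  by case: (nxtP H (Ls H n)) => _ /negP.
move=> m n e; case: (ltngtP m n) => // h.
  by case: (key _ _ h e).
by case: (key _ _ h (esym e)).
Qed.

End InfSeq.
Section Absorb.
Variables (A : eqType) (P : A -> Prop).
Record gd := GD { gD : A -> Prop; gf : A -> nat -> A }.
Definition good (x : gd) := (forall a, gD x a -> P a) /\ (forall a n, gD x a -> gD x (gf x a n)) /\
  (forall a n b m, gD x a -> gD x b -> gf x a n = gf x b m -> a = b /\ n = m).
Definition gT := {x : gd | good x}.
Definition gR (x y : gT) := (forall a, gD (proj1_sig x) a -> gD (proj1_sig y) a) /\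
  forall a n, gD (proj1_sig x) a -> gf (proj1_sig x) a n = gf (proj1_sig y) a n.

Lemma gR_refl x : gR x x. Proof. by split. Qed.
Lemma gR_trans x y z : gR x y -> gR y z -> gR x z.
Proof.
move=> [h1 h2] [h3 h4]; split; first by move=> a /h1 /h3.
by move=> a n ha; rewrite h2 // h4 //; apply: h1.
Qed.

Section UB.
Variable c : gT -> Prop.
Hypothesis hc : zchain gR c.
Definition UD a := exists x, c x /\ gD (proj1_sig x) a.
Definition Uf a n := match excluded_middle_informative (UD a) with
  | left h => gf (proj1_sig (proj1_sig (constructive_indefinite_description _ h))) a n
  | right _ => a end.
Lemma Uf_spec x a n : c x -> gD (proj1_sig x) a -> Uf a n = gf (proj1_sig x) a n.
Proof.
move=> cx hx; rewrite /Uf; case: excluded_middle_informative => [h|h]; last first.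
  by case: h; exists x.
destruct (constructive_indefinite_description _ h) as [y [cy hy]] => /=.
case: (hc cy cx) => [[_ e]|[_ e]]; first exact: e.
by rewrite e.
Qed.
Lemma U_good : good (GD UD Uf).
Proof.
split; last split => /=.
- by move=> a [x [_ hx]]; case: (proj2_sig x) => h _; apply: h.
- move=> a n [x [cx hx]]; rewrite (Uf_spec n cx hx); exists x; split => //.
  by case: (proj2_sig x) => _ [h _]; apply: h.
- move=> a n b m [x [cx hx]] [y [cy hy]]; rewrite (Uf_spec n cx hx) (Uf_spec m cy hy).
  case: (hc cx cy) => [[h1 h2]|[h1 h2]].
    rewrite h2 //; case: (proj2_sig y) => _ [_ h]; apply: h => //; exact: h1.
  rewrite [gf _ b m]h2 //; case: (proj2_sig x) => _ [_ h]; apply: h => //; exact: h1.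
Qed.
Lemma U_ub : exists ub, forall x, c x -> gR x ub.
Proof.
exists (exist _ _ U_good) => x cx; split => /=.
  by move=> a hx; exists x.
by move=> a n hx; rewrite (Uf_spec n cx hx).
Qed.
End UB.

Definition eidx (e : nat -> A) (a : A) : nat :=
  match excluded_middle_informative (exists i, e i = a) with
  | left h => proj1_sig (constructive_indefinite_description _ h)
  | right _ => 0 end.
Lemma eidxP e i : e (eidx e (e i)) = e i.
Proof.
rewrite /eidx; case: excluded_middle_informative => [h|h]; last by case: h; exists i.
by destruct (constructive_indefinite_description _ h).
Qed.

Theorem absorb : ~ pfinite P -> exists h : A -> nat -> A,
  (forall a n, P a -> P (h a n)) /\
  (forall a n b m, P a -> P b -> h a n = h b m -> a = b /\ n = m).
Proof.
move=> nf.
have [m hm] := zorn gR_refl gR_trans (fun c hc => U_ub hc).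
case: m hm => [[D f] [DP [Dcl Dinj]]] hm /=.
have fin : pfinite (fun a => P a /\ ~ D a).
  apply: NNPP => nf2; have [e [eP einj]] := infinite_seq nf2.
  pose D' a := D a \/ exists i, e i = a.
  pose f' a n := if pb (D a) then f a n else e (pickle (eidx e a, n)).
  have g' : good (GD D' f').
    split; last split => /=.
    - by move=> a [/DP //|[i <-]]; case: (eP i).
    - move=> a n [ha|[i <-]]; rewrite /f'; case: pbP => h.
      + by left; apply: (Dcl).
      + by [].
      + by left; apply: (Dcl).
      + by right; eexists.
    - move=> a n b k; rewrite /f' /D'.
      case: pbP => ha; case: pbP => hb.
      + by move=> _ _; apply: (Dinj).
      + move=> _ [//|[j ej]] E; exfalso.
        by case: (eP (pickle (eidx e b, k))) => _; apply; rewrite -E; apply: (Dcl).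
      + move=> [//|[j ej]] _ E; exfalso.
        by case: (eP (pickle (eidx e a, n))) => _; apply; rewrite E; apply: (Dcl).
      + move=> [//|[i ei]] [//|[j ej]] /einj /pickle_inj2 [E1 ->]; split => //.
        by rewrite -ei -ej -(eidxP e i) -(eidxP e j) ei ej E1.
  have r : gR (exist _ (GD D f) (conj DP (conj Dcl Dinj))) (exist _ _ g').
    split => /=; first by move=> a ha; left.
    by move=> a n ha; rewrite /f'; case: pbP.
  have [r1 _] := hm _ r.
  by case: (eP 0) => _; apply; apply: r1; right; exists 0.
case: fin => F hF.
have [d0 Dd0] : exists d0, D d0.
  apply: NNPP => hn; apply: nf; exists F => a Pa; apply: hF; split => // Da.
  by apply: hn; exists a.
exists (fun a n => if pb (D a) then f a n.*2 else f d0 (pickle (index a F, n)).*2.+1).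
split.
  by move=> a n _; case: pbP => h; apply: (DP); apply: (Dcl).
move=> a n b k Pa Pb; case: pbP => ha; case: pbP => hb.
- by move/Dinj => /(_ ha hb) [-> /double_inj ->].
- move/Dinj => /(_ ha Dd0) [_ /(congr1 odd)]; by rewrite /= !odd_double.
- move/Dinj => /(_ Dd0 hb) [_ /(congr1 odd)]; by rewrite /= !odd_double.
- move/Dinj => /(_ Dd0 Dd0) [_ /eq_add_S /double_inj /pickle_inj2 [E ->]]; split => //.
  have aF : a \in F by apply: hF.
  have bF : b \in F by apply: hF.
  by rewrite -(nth_index a aF) -(nth_index a bF) E.
Qed.
End Absorb.

Local Open Scope ring_scope.

Section Iso.
Variables (k : fieldType) (A : eqType) (P Q : A -> Prop) (F G : A -> A -> k) (cF cG : k).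
Hypotheses (hcF : cF != 0) (hcG : cG != 0) (HF : forall a, P a -> exists l : seq A, forall b, F a b != 0 -> b \in l)
  (HFQ : forall a b, P a -> F a b != 0 -> Q b)
  (HG : forall b, Q b -> exists l : seq A, forall a, G b a != 0 -> a \in l)
  (HGP : forall b a, Q b -> G b a != 0 -> P a)
  (HGF : forall a a', P a -> P a' -> forall l : seq A, uniq l -> (forall b, F a b != 0 -> b \in l) ->
      \sum_(b <- l) F a b * G b a' = cF * (a == a')%:R)
  (HFG : forall b b', Q b -> Q b' -> forall l : seq A, uniq l -> (forall a, G b a != 0 -> a \in l) ->
      \sum_(a <- l) G b a * F a b' = cG * (b == b')%:R).

Lemma dim_le (xs ys : seq A) : uniq xs -> uniq ys -> (forall x, x \in xs -> P x) ->
  (forall x b, x \in xs -> F x b != 0 -> b \in ys) -> (size xs <= size ys)%N.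
Proof.
move=> uxs uys xsP xsF.
case exs: xs => [//|x0 xs']; rewrite -exs.
pose M := \matrix_(i < size xs, j < size ys) F (nth x0 xs i) (nth x0 ys j).
have : row_free M.
  apply: inj_row_free => v hv; apply/rowP => i; rewrite mxE.
  have hi : nth x0 xs i \in xs by rewrite mem_nth.
  have e1 : forall y, \sum_(i0 < size xs) v 0 i0 * F (nth x0 xs i0) y = 0.
    move=> y; case: (boolP (y \in ys)) => hy.
      have hyi : (index y ys < size ys)%N by rewrite index_mem.
      have := congr1 (fun w : 'rV[k]_(size ys) => w 0 (Ordinal hyi)) hv.
      rewrite !mxE /= => h; apply: etrans h; apply: eq_bigr => j _; by rewrite mxE /= nth_index.
    apply: big1 => j _; case: (eqVneq (F (nth x0 xs j) y) 0) => [->|h]; first by rewrite mulr0.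
    by case/negP: hy; apply: (xsF _ _ (mem_nth _ _)) h.
  have e2 : v 0 i = \sum_(j < size xs) v 0 j * (nth x0 xs j == nth x0 xs i)%:R.
    rewrite (bigD1 i) //= eqxx mulr1 big1 ?addr0 // => j hj.
    rewrite nth_uniq //; case: eqP => [e|_]; [by case/eqP: hj; apply: val_inj|by rewrite mulr0].
  have e3 : cF * v 0 i = 0.
    rewrite e2 big_distrr /=.
    transitivity (\sum_(j < size xs) v 0 j * \sum_(b <- ys) F (nth x0 xs j) b * G b (nth x0 xs i)).
      apply: eq_bigr => j _; rewrite HGF; [by rewrite mulrCA|exact: xsP (mem_nth _ _)|exact: xsP|by []|].
      by move=> b; apply: xsF (mem_nth _ _).
    under eq_bigr do rewrite big_distrr /=.
    rewrite exchange_big /= big1 // => b _.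
    under eq_bigr do rewrite mulrA. by rewrite -big_distrl /= e1 mul0r.
  by move/eqP: e3; rewrite mulf_eq0 (negbTE hcF) => /eqP.
rewrite -row_leq_rank => h; exact: leq_trans h (rank_leq_col _).
Qed.
End Iso.

Section Iso2.
Variables (k : fieldType) (A : eqType) (P Q : A -> Prop) (F G : A -> A -> k) (cF cG : k).
Hypotheses (hcF : cF != 0) (hcG : cG != 0) (HF : forall a, P a -> exists l : seq A, forall b, F a b != 0 -> b \in l)
  (HFQ : forall a b, P a -> F a b != 0 -> Q b)
  (HG : forall b, Q b -> exists l : seq A, forall a, G b a != 0 -> a \in l)
  (HGP : forall b a, Q b -> G b a != 0 -> P a)
  (HGF : forall a a', P a -> P a' -> forall l : seq A, uniq l -> (forall b, F a b != 0 -> b \in l) ->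
      \sum_(b <- l) F a b * G b a' = cF * (a == a')%:R)
  (HFG : forall b b', Q b -> Q b' -> forall l : seq A, uniq l -> (forall a, G b a != 0 -> a \in l) ->
      \sum_(a <- l) G b a * F a b' = cG * (b == b')%:R).

Lemma finPQ : pfinite P -> pfinite Q.
Proof.
move=> [lP hP]; apply: NNPP => nQ.
have [e [eQ einj]] := infinite_seq nQ.
pose ys := [seq e i | i <- iota 0 (size (undup lP)).+1].
have : (size ys <= size (undup lP))%N.
  apply: (@dim_le k A Q G F cG hcG HFG).
  - by rewrite map_inj_uniq ?iota_uniq // => m n /einj.
  - exact: undup_uniq.
  - by move=> x /mapP [i _ ->].
  - move=> x b /mapP [i _ ->] h; rewrite mem_undup; apply: hP; exact: HGP h.
by rewrite size_map size_iota ltnn.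
Qed.

Lemma finite_equal : pfinite P -> pfinite Q -> equinum P Q.
Proof.
move=> [lP hP] [lQ hQ].
pose XP := undup [seq a <- lP | pb (P a)].
pose XQ := undup [seq a <- lQ | pb (Q a)].
have mP a : (a \in XP) <-> P a.
  rewrite mem_undup mem_filter; split; first by case/andP => /pbP.
  by move=> Pa; rewrite hP // andbT; apply/pbP.
have mQ a : (a \in XQ) <-> Q a.
  rewrite mem_undup mem_filter; split; first by case/andP => /pbP.
  by move=> Qa; rewrite hQ // andbT; apply/pbP.
have s1 : (size XP <= size XQ)%N.
  apply: (@dim_le k A P F G cF hcF HGF) => //; rewrite ?undup_uniq //.
    by move=> x /mP.
  by move=> x b /mP Px h; apply/mQ; exact: HFQ h.
have s2 : (size XQ <= size XP)%N.
  apply: (@dim_le k A Q G F cG hcG HFG) => //; rewrite ?undup_uniq //.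
    by move=> x /mQ.
  by move=> x b /mQ Qx h; apply/mP; exact: HGP h.
have es : size XP = size XQ by apply/eqP; rewrite eqn_leq s1 s2.
case eXP: XP => [|x0 XP'].
  exists id, id; split; last split; last split.
  - by move=> a /mP; rewrite eXP.
  - move=> b /mQ; rewrite (@size0nil _ XQ) // -es eXP //.
  - by [].
  - by [].
exists (fun a => nth x0 XQ (index a XP)), (fun b => nth x0 XP (index b XQ)).
have uP : uniq XP by apply: undup_uniq.
have uQ : uniq XQ by apply: undup_uniq.
split; last split; last split.
- by move=> a /mP aX; apply/mQ; rewrite mem_nth // -es index_mem.
- by move=> b /mQ bX; apply/mP; rewrite mem_nth // es index_mem.
- by move=> a /mP aX; rewrite index_uniq ?nth_index // -es index_mem.
- by move=> b /mQ bX; rewrite index_uniq ?nth_index // es index_mem.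
Qed.

Definition suppl (a : A) : seq A :=
  match excluded_middle_informative (exists l : seq A, forall b, F a b != 0 -> b \in l) with
  | left h => proj1_sig (constructive_indefinite_description _ h)
  | right _ => [::] end.
Lemma supplP a : P a -> forall b, F a b != 0 -> b \in suppl a.
Proof.
move=> Pa; rewrite /suppl; case: excluded_middle_informative => [h|h]; last by case: h; apply: HF.
by destruct (constructive_indefinite_description _ h).
Qed.

Lemma sum_nz (l : seq A) (x : A -> k) : \sum_(a <- l) x a != 0 -> exists a, a \in l /\ x a != 0.
Proof.
move=> h; apply: NNPP => hn; move: h; rewrite big_seq big1.
  by rewrite eqxx.
move=> a al; apply/eqP; apply: NNPP => nz; apply: hn; exists a; split => //; exact/negP.
Qed.

Definition pa (b : A) : A :=
  match excluded_middle_informative (exists a, P a /\ F a b != 0) with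
  | left h => proj1_sig (constructive_indefinite_description _ h)
  | right _ => b end.
Lemma paP b : Q b -> P (pa b) /\ F (pa b) b != 0.
Proof.
move=> Qb; rewrite /pa; case: excluded_middle_informative => [h|h]; last first.
  case: h; have [l hl] := HG Qb.
  have := HFG Qb Qb (undup_uniq l); rewrite eqxx mulr1 => /(_ _) hs.
  have hs' : forall a, G b a != 0 -> a \in undup l by move=> a h; rewrite mem_undup; apply: hl.
  have hne : \sum_(a <- undup l) G b a * F a b != 0 by rewrite (hs hs').
  have [a [al nz]] := sum_nz hne.
  exists a; split; last by apply: contraNneq nz => ->; rewrite mulr0.
  by apply: (HGP Qb); apply: contraNneq nz => ->; rewrite mul0r.
by destruct (constructive_indefinite_description _ h).
Qed.

Lemma injQP : ~ pfinite P -> exists i : A -> A, (forall b, Q b -> P (i b)) /\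
  (forall b b', Q b -> Q b' -> i b = i b' -> b = b').
Proof.
move=> nP; have [h [hP hinj]] := absorb nP.
exists (fun b => h (pa b) (index b (suppl (pa b)))); split.
  by move=> b Qb; apply: hP; case: (paP Qb).
move=> b b' Qb Qb' /hinj [] //; try by case: (paP Qb); try by case: (paP Qb').
move=> e1 e2.
have [P1 n1] := paP Qb; have [P2 n2] := paP Qb'.
have m1 := supplP P1 n1; have m2 := supplP P2 n2.
rewrite -e1 in m2.
by rewrite -(nth_index b m1) e2 e1 nth_index // -e1.
Qed.
End Iso2.

Theorem iso_equinum (k : fieldType) (A : eqType) (P Q : A -> Prop) (F G : A -> A -> k) (cF cG : k)
  (hcF : cF != 0) (hcG : cG != 0)
  (HF : forall a, P a -> exists l : seq A, forall b, F a b != 0 -> b \in l)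
  (HFQ : forall a b, P a -> F a b != 0 -> Q b)
  (HG : forall b, Q b -> exists l : seq A, forall a, G b a != 0 -> a \in l)
  (HGP : forall b a, Q b -> G b a != 0 -> P a)
  (HGF : forall a a', P a -> P a' -> forall l : seq A, uniq l -> (forall b, F a b != 0 -> b \in l) ->
      \sum_(b <- l) F a b * G b a' = cF * (a == a')%:R)
  (HFG : forall b b', Q b -> Q b' -> forall l : seq A, uniq l -> (forall a, G b a != 0 -> a \in l) ->
      \sum_(a <- l) G b a * F a b' = cG * (b == b')%:R) : equinum P Q.
Proof.
case: (classic (pfinite P)) => fP.
  by apply: (finite_equal hcF hcG HFQ HGP HGF HFG fP (finPQ hcG HGP HFG fP)).
case: (classic (pfinite Q)) => fQ.
  by apply: (finite_equal hcF hcG HFQ HGP HGF HFG (finPQ hcF HFQ HGF fQ) fQ).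
have [i1 [i1P i1inj]] := injQP hcG HF HG HGP HFG fP.
have [i2 [i2P i2inj]] := injQP hcF HG HF HFQ HGF fQ.
exact: SB i2P i1P i2inj i1inj.
Qed.

Section Gen.
Variables (k : fieldType) (V A : eqType) (s t : A -> V).
Notation qp := (qpath V A).

Definition fins (x : qp -> k) := exists sq : seq qp, forall p, x p != 0 -> p \in sq.

Lemma supP (x : qp -> k) : fins x -> forall p, x p != 0 -> p \in sup x.
Proof.
move=> h p hp; rewrite /sup mem_undup.
have := @epsilon_spec _ (inhabits (@nil qp)) (fun sq => forall p, x p != 0 -> p \in sq) h.
by apply.
Qed.

Lemma sum_filter_eq (x : qp -> k) (G : qp -> k) (l1 l2 : seq qp) : uniq l1 -> uniq l2 ->
  (forall p, x p != 0 -> p \in l1) -> (forall p, x p != 0 -> p \in l2) ->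
  \sum_(p <- l1) x p * G p = \sum_(p <- l2) x p * G p.
Proof.
move=> u1 u2 h1 h2.
have E l : \sum_(p <- l) x p * G p = \sum_(p <- [seq p <- l | x p != 0]) x p * G p.
  rewrite big_filter [RHS]big_mkcond; apply: eq_bigr => p _.
  by case: (eqVneq (x p) 0) => [->|]; rewrite ?mul0r.
rewrite E [RHS]E; apply: perm_big; apply: uniq_perm; rewrite ?filter_uniq //.
move=> p; rewrite !mem_filter; case: (boolP (x p != 0)) => //= hp.
by rewrite h1 ?h2.
Qed.

Lemma lin0E (x : qp -> k) G (l : seq qp) : fins x -> uniq l -> (forall p, x p != 0 -> p \in l) ->
  lin0 x G = \sum_(p <- l) x p * G p.
Proof.
move=> fx ul hl; apply: sum_filter_eq => //; first exact: undup_uniq.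
exact: supP.
Qed.

Lemma linE (T : Type) (x : qp -> k) (F : qp -> T -> k) (l : seq qp) q : fins x -> uniq l ->
  (forall p, x p != 0 -> p \in l) -> lin x F q = \sum_(p <- l) x p * F p q.
Proof. move=> fx ul hl; exact: (lin0E (fun p => F p q) fx ul hl). Qed.

Lemma sum_delta (x : qp -> k) (l : seq qp) u : uniq l -> (forall p, x p != 0 -> p \in l) ->
  \sum_(p <- l) x p * (p == u)%:R = x u.
Proof.
move=> ul hl; case: (boolP (u \in l)) => ul'.
  rewrite (bigD1_seq u) //= eqxx mulr1 big1 ?addr0 // => p /negbTE ->; by rewrite mulr0.
rewrite big_seq big1; last by move=> p pl; case: eqP => [e|_]; [by move: pl; rewrite e (negbTE ul')|by rewrite mulr0].
by apply/esym/eqP; apply: contraNT ul' => /hl.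
Qed.

Lemma fins_bas (p : qp) : fins (bas p : qp -> k).
Proof. exists [:: p] => q; rewrite /bas inE; by case: (eqVneq q p) => //= _; rewrite mulr0n eqxx. Qed.

Lemma lin0_bas (p : qp) G : lin0 (bas p : qp -> k) G = G p.
Proof.
rewrite (@lin0E _ _ [:: p] (fins_bas p)) // ?big_seq1 /bas ?eqxx ?mul1r //.
by move=> q; rewrite inE /bas; case: (eqVneq q p) => //= _; rewrite mulr0n eqxx.
Qed.

Lemma lin_bas (T : Type) (p : qp) (F : qp -> T -> k) q : lin (bas p) F q = F p q.
Proof. exact: (lin0_bas p (fun r => F r q)). Qed.

Lemma lin0_ext (x : qp -> k) G1 G2 : (forall p, x p != 0 -> G1 p = G2 p) -> lin0 x G1 = lin0 x G2.
Proof.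
move=> h; apply: eq_bigr => p _; case: (eqVneq (x p) 0) => [->|/h ->]; by rewrite ?mul0r.
Qed.

Lemma lin0_lin (x : qp -> k) (Fp : qp -> qp -> k) : fins x -> (forall p, x p != 0 -> fins (Fp p)) ->
  fins (lin x Fp) /\ forall G, lin0 (lin x Fp) G = lin0 x (fun p => lin0 (Fp p) G).
Proof.
move=> fx fF.
pose L := undup (flatten [seq sup (Fp p) | p <- sup x]).
have hL : forall p r, x p != 0 -> Fp p r != 0 -> r \in L.
  move=> p r hp hr; rewrite mem_undup; apply/flattenP; exists (sup (Fp p)).
    by apply/mapP; exists p => //; apply: supP.
  exact: supP (fF _ hp) _ hr.
have hy : forall r, lin x Fp r != 0 -> r \in L.
  move=> r; rewrite /lin => hr; have [p _ hp] : exists2 p, p \in sup x & x p * Fp p r != 0.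
    apply: NNPP => hn; move: hr; rewrite big_seq big1 ?eqxx // => p pin.
    by apply/eqP; apply: NNPP => ne; apply: hn; exists p => //; apply/negP.
  by apply: (hL p); [apply: contraNneq hp => ->; rewrite mul0r|apply: contraNneq hp => ->; rewrite mulr0].
have fy : fins (lin x Fp) by exists L.
split => // G; rewrite (lin0E _ fy (undup_uniq _) hy).
rewrite /lin0 /lin.
under eq_bigr do rewrite big_distrl /=.
rewrite exchange_big /=; apply: eq_bigr => p _.
case: (eqVneq (x p) 0) => [->|hp].
  by rewrite mul0r big1 // => r _; rewrite mul0r mul0r.
rewrite -[RHS]/(x p * lin0 (Fp p) G) (lin0E _ (fF _ hp) (undup_uniq _) (hL p ^~ hp)).
by rewrite big_distrr /=; apply: eq_bigr => r _; rewrite mulrA.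
Qed.

End Gen.

Section Paths.
Variables (k : fieldType) (V A : eqType) (s t : A -> V).
Notation qp := (qpath V A).

Lemma valid_vtx v : valid s t (vtx v : qp). Proof. by []. Qed.
Lemma valid_arr a : valid s t (arr s a : qp). Proof. by rewrite /valid /= eqxx. Qed.
Lemma splits_vtx v : splits t (vtx v : qp) = [:: (vtx v, vtx v)]. Proof. by []. Qed.
Lemma splits_arr a : splits t (arr s a : qp) = [:: (vtx (t a), arr s a); (arr s a, vtx (s a))].
Proof. by []. Qed.
Lemma sw2_vtx v (F : qp -> qp -> k) : sw2 t (vtx v) F = F (vtx v) (vtx v).
Proof. by rewrite /sw2 splits_vtx big_seq1. Qed.
Lemma sw2_arr a (F : qp -> qp -> k) :
  sw2 t (arr s a) F = F (vtx (t a)) (arr s a) + F (arr s a) (vtx (s a)).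
Proof. by rewrite /sw2 splits_arr big_cons big_seq1. Qed.
Lemma sw3_vtx v (F : qp -> qp -> qp -> k) : sw3 t (vtx v) F = F (vtx v) (vtx v) (vtx v).
Proof. by rewrite /sw3 splits_vtx big_seq1 /= ?splits_vtx ?big_seq1. Qed.
Lemma sw5_vtx v (F : qp -> qp -> qp -> qp -> qp -> k) :
  sw5 t (vtx v) F = F (vtx v) (vtx v) (vtx v) (vtx v) (vtx v).
Proof. by rewrite /sw5 splits_vtx big_seq1 /= ?splits_vtx ?big_seq1 /= ?splits_vtx ?big_seq1 /= ?splits_vtx ?big_seq1. Qed.

Lemma plen0 (p : qp) : plen p = 0%N -> p = vtx p.1.
Proof. by case: p => v [|]. Qed.
Lemma plen1 (p : qp) : valid s t p -> plen p = 1%N -> exists a, p = arr s a.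
Proof.
case: p => v [|a [|b l]] hv hl; try by rewrite /plen in hl.
exists a; move: hv; rewrite /valid /= andbT => /eqP e; by rewrite /arr e.
Qed.
Lemma arr_inj a b : (arr s a : qp) = arr s b -> a = b.
Proof. by case. Qed.
Lemma vtx_inj v w : (vtx v : qp) = vtx w -> v = w.
Proof. by case. Qed.
Lemma vtx_arr v a : (vtx v : qp) != arr s a. Proof. by apply/eqP; case. Qed.

Lemma elt_fins (x : qp -> k) : elt s t x -> fins x.
Proof. by case. Qed.

Lemma bas_inj (p q : qp) : (bas p : qp -> k) =1 bas q -> p = q.
Proof.
move=> h; have := h p; rewrite /bas eqxx; case: eqP => // _ /eqP.
by rewrite mulr0n oner_eq0.
Qed.

Lemma sum_nz_qp (l : seq qp) (x : qp -> k) : \sum_(a <- l) x a != 0 -> exists a, a \in l /\ x a != 0.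
Proof.
move=> h; apply: NNPP => hn; move: h; rewrite big_seq big1 ?eqxx //.
move=> a al; apply/eqP; apply: NNPP => nz; apply: hn; exists a; split => //; exact/negP.
Qed.

Lemma lin0_delta (x : qp -> k) u : fins x -> lin0 x (fun r => (r == u)%:R) = x u.
Proof. move=> fx; apply: sum_delta; [exact: undup_uniq|exact: supP]. Qed.

Lemma grouplike (x : qp -> k) : elt s t x -> (forall r, x r != 0 -> plen r = 0%N) ->
  lin0 x eps = 1 -> (forall u v, cop t x (u, v) = x u * x v) ->
  exists w, x =1 bas (vtx w).
Proof.
move=> ex deg e1 ecop; have fx := elt_fins ex.
have vt r : x r != 0 -> r = vtx r.1 by move/deg/plen0.
have ecop' u v : cop t x (u, v) = lin0 x (fun r => ((r, r) == (u, v))%:R).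
  apply: lin0_ext => r /vt -> /=; by rewrite addn0.
have cuu u : cop t x (u, u) = x u.
  rewrite ecop' -(lin0_delta u fx); apply: lin0_ext => r _; by rewrite xpair_eqE andbb.
have cuv u v : u != v -> cop t x (u, v) = 0.
  move=> ne; rewrite ecop' (lin0_ext (G2 := fun _ => 0)) /lin0.
    by rewrite big1 // => r _; rewrite mulr0.
  move=> r _; rewrite xpair_eqE; case: (eqVneq r u) => [->|] //=.
  by rewrite (negbTE ne).
have hs : \sum_(r <- sup x) x r = 1.
  rewrite -e1 /lin0; apply: eq_bigr => r _.
  case: (eqVneq (x r) 0) => [->|/vt ->]; by rewrite ?mul0r // /eps /= mulr1.
have : \sum_(r <- sup x) x r != 0 by rewrite hs oner_eq0.
case/sum_nz_qp => r0 [_ nz0].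
have one0 : x r0 = 1.
  have := cuu r0; rewrite ecop => e; apply/esym/(mulfI nz0); by rewrite mulr1.
exists r0.1 => q; rewrite -(vt _ nz0) /bas.
case: (eqVneq q r0) => [->|ne] /=; first by rewrite one0.
apply/eqP; apply: NNPP => /negP nz.
have := cuv _ _ ne; rewrite ecop one0 mulr1 => e.
by rewrite e eqxx in nz.
Qed.
End Paths.

Section Majid.
Variables (k : fieldType) (V A : eqType) (s t : A -> V)
  (mul : qpath V A -> qpath V A -> qpath V A -> k) (one : qpath V A -> k)
  (Phi Phinv : qpath V A -> qpath V A -> qpath V A -> k)
  (S : qpath V A -> qpath V A -> k) (alpha beta : qpath V A -> k).
Hypothesis H : graded_majid s t mul one Phi Phinv S alpha beta.
Notation qp := (qpath V A).

Lemma vV g : valid s t (vtx g : qp). Proof. by []. Qed.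
Lemma epsV g : eps (vtx g : qp) = 1 :> k. Proof. by []. Qed.

Lemma mul_vv g h : exists w, mul (vtx g) (vtx h) =1 bas (vtx w).
Proof.
apply: grouplike.
- exact: gm_mul_elt H _ _ (vV g) (vV h).
- by move=> r /(gm_mul_deg H (vV g) (vV h)).
- by rewrite (gm_mul_eps H (vV g) (vV h)) !epsV mulr1.
- by move=> u v; rewrite (gm_mul_cop H (vV g) (vV h)) !sw2_vtx.
Qed.

Lemma one_v : exists w, one =1 bas (vtx w).
Proof.
apply: grouplike.
- exact: gm_one_elt H.
- exact: gm_one_deg H.
- exact: gm_one_eps H.
- exact: gm_one_cop H.
Qed.

Lemma S_v g : exists w, S (vtx g) =1 bas (vtx w).
Proof.
apply: grouplike.
- exact: gm_S_elt H _ (vV g).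
- by move=> r /(gm_S_deg H (vV g)).
- by rewrite (gm_S_eps H (vV g)).
- by move=> u v; rewrite (gm_S_cop H (vV g)) !sw2_vtx.
Qed.

Definition op g h := proj1_sig (constructive_indefinite_description _ (mul_vv g h)).
Definition unit := proj1_sig (constructive_indefinite_description _ one_v).
Definition inv g := proj1_sig (constructive_indefinite_description _ (S_v g)).

Lemma opP g h : mul (vtx g) (vtx h) =1 bas (vtx (op g h)).
Proof. by rewrite /op; case: constructive_indefinite_description. Qed.
Lemma unitP : one =1 bas (vtx unit).
Proof. by rewrite /unit; case: constructive_indefinite_description. Qed.
Lemma invP g : S (vtx g) =1 bas (vtx (inv g)).
Proof. by rewrite /inv; case: constructive_indefinite_description. Qed.

Lemma opF g h : mul (vtx g) (vtx h) = bas (vtx (op g h)).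
Proof. exact: functional_extensionality (opP g h). Qed.
Lemma unitF : one = bas (vtx unit).
Proof. exact: functional_extensionality unitP. Qed.
Lemma invF g : S (vtx g) = bas (vtx (inv g)).
Proof. exact: functional_extensionality (invP g). Qed.

Lemma PhiV g h l : Phi (vtx g) (vtx h) (vtx l) != 0.
Proof.
have := gm_Phi_inv_r H (vV g) (vV h) (vV l); rewrite !sw2_vtx !epsV !mulr1.
by apply: contra_eqN => /eqP ->; rewrite mul0r eq_sym oner_eq0.
Qed.

Lemma bas_eq_mul (p q : qp) (c : k) : c != 0 -> (forall r, bas p r * c = c * bas q r) -> p = q.
Proof.
move=> nc h; apply: bas_inj => r; apply: (mulIf nc); by rewrite h mulrC.
Qed.

Lemma opA x y z : op (op x y) z = op x (op y z).
Proof.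
apply/esym/(@vtx_inj V A); apply: (bas_eq_mul (PhiV x y z)) => q.
have := gm_assoc H (vV x) (vV y) (vV z) q; rewrite !sw2_vtx !opF !lin_bas !opF.
by [].
Qed.

Lemma vbas_inj g h : (bas (vtx g) : qp -> k) =1 bas (vtx h) -> g = h.
Proof. by move/bas_inj => [->]. Qed.

Lemma op1x x : op unit x = x.
Proof.
apply: vbas_inj => q; have := gm_unitl H (vV x) q.
by rewrite unitF lin_bas /= opF.
Qed.
Lemma opx1 x : op x unit = x.
Proof.
apply: vbas_inj => q; have := gm_unitr H (vV x) q.
by rewrite unitF lin_bas /= opF.
Qed.

Lemma alpha_beta_nz g : alpha (vtx g) != 0 /\ beta (vtx g) != 0.
Proof.
have := gm_vi1 H (vV g); rewrite sw5_vtx epsV => e.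
split; apply: contra_eqN e => /eqP ->; by rewrite ?mulr0 ?mul0r eq_sym oner_eq0.
Qed.

Lemma opVx x : op (inv x) x = unit.
Proof.
have [na _] := alpha_beta_nz x.
apply: (@vtx_inj V A); apply: (bas_eq_mul na) => q.
have := gm_alpha H (vV x) q; rewrite sw3_vtx invF lin_bas /= opF unitF => ->.
by [].
Qed.
Lemma opxV x : op x (inv x) = unit.
Proof.
have [_ nb] := alpha_beta_nz x.
apply: (@vtx_inj V A); apply: (bas_eq_mul nb) => q.
have := gm_beta H (vV x) q; rewrite sw3_vtx invF lin_bas /= opF unitF => ->.
by [].
Qed.
End Majid.

Section Arr.
Variables (k : fieldType) (V A : eqType) (s t : A -> V).
Notation qp := (qpath V A).

Lemma lin_nz (x : qp -> k) (Fp : qp -> qp -> k) r : lin x Fp r != 0 -> exists p, x p != 0 /\ Fp p r != 0.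
Proof.
rewrite /lin => h; have [p [_ hp]] := sum_nz_qp h.
by exists p; split; apply: contraNneq hp => ->; rewrite ?mul0r ?mulr0.
Qed.

Lemma lin0_lin2 (x : qp -> k) (F1 F2 : qp -> k) c1 c2 :
  lin0 x (fun p => c1 * F1 p + F2 p * c2) = c1 * lin0 x F1 + lin0 x F2 * c2.
Proof.
rewrite /lin0 big_distrr big_distrl /= -big_split /=; apply: eq_bigr => p _.
by rewrite mulrDr; congr (_ + _); [exact: mulrCA|exact: mulrA].
Qed.

Lemma lin0_scale (x : qp -> k) (F : qp -> k) c : lin0 x (fun p => c * F p) = c * lin0 x F.
Proof. by rewrite /lin0 big_distrr /=; apply: eq_bigr => p _; rewrite mulrCA. Qed.

Lemma count_arr b (u v : qp) :
  (count_mem (u, v) (splits t (arr s b)))%:R =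
  (((vtx (t b), arr s b) == (u, v)) + ((arr s b, vtx (s b)) == (u, v)) : nat)%:R :> k.
Proof. by rewrite splits_arr /= addn0. Qed.

Lemma arr_vtxF a v : (arr s a == vtx v :> qp) = false.
Proof. by apply/eqP; case. Qed.
Lemma vtx_arrF a v : (vtx v == arr s a :> qp) = false.
Proof. by apply/eqP; case. Qed.

Lemma inM_supp g h (m : qp -> k) p : inM s t g h m -> m p != 0 ->
  exists a, p = arr s a /\ s a = h /\ t a = g.
Proof. by case=> _ hm /hm. Qed.

Lemma arrow_char (y : qp -> k) G H : elt s t y -> (forall r, y r != 0 -> plen r = 1%N) ->
  (forall u v, cop t y (u, v) = bas (vtx G) u * y v + y u * bas (vtx H) v) -> inM s t G H y.
Proof.
move=> ey deg ecop; split => // p hp.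
have [a ea] := plen1 (proj2 ey p hp) (deg p hp); subst p; exists a.
have fy := elt_fins ey.
have supa r : y r != 0 -> exists b, r = arr s b.
  by move=> hr; apply: plen1 (proj2 ey r hr) (deg r hr).
have c1 : cop t y (vtx (t a), arr s a) = y (arr s a).
  rewrite -(lin0_delta (arr s a) fy); apply: lin0_ext => r /supa [b ->].
  rewrite count_arr !xpair_eqE /= ?eqseq_cons.
  by case: (eqVneq b a) => [->|ne]; rewrite ?eqxx ?(negbTE ne) /= ?andbF ?andbT.
have c2 : cop t y (arr s a, vtx (s a)) = y (arr s a).
  rewrite -(lin0_delta (arr s a) fy); apply: lin0_ext => r /supa [b ->].
  rewrite count_arr !xpair_eqE /= ?eqseq_cons.
  by case: (eqVneq b a) => [->|ne]; rewrite ?eqxx ?(negbTE ne) /= ?andbF ?andbT.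
have e2 := c2; rewrite ecop /bas arr_vtxF mul0r add0r in e2.
have e1 := c1; rewrite ecop /bas arr_vtxF mulr0 addr0 in e1.
split => //; split.
  case: (eqVneq (vtx (s a) : qp) (vtx H)) e2 => [/vtx_inj -> //|_].
  by rewrite mulr0 => /esym/eqP; rewrite (negbTE hp).
case: (eqVneq (vtx (t a) : qp) (vtx G)) e1 => [/vtx_inj -> //|_].
by rewrite mul0r => /esym/eqP; rewrite (negbTE hp).
Qed.
End Arr.

Section Act.
Variables (k : fieldType) (V A : eqType) (s t : A -> V)
  (mul : qpath V A -> qpath V A -> qpath V A -> k) (one : qpath V A -> k)
  (Phi Phinv : qpath V A -> qpath V A -> qpath V A -> k)
  (S : qpath V A -> qpath V A -> k) (alpha beta : qpath V A -> k).
Hypothesis H : graded_majid s t mul one Phi Phinv S alpha beta.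
Notation qp := (qpath V A).
Notation op := (op H). Notation unit := (unit H). Notation inv := (inv H).

Lemma inM_elt g h (m : qp -> k) : inM s t g h m -> elt s t m.
Proof. by case. Qed.

Lemma Phi_arr1 a x y : Phi (arr s a) (vtx x) (vtx y) = 0.
Proof. by apply: (gm_Phi_deg H (valid_arr _ _ _) (vV s t _) (vV s t _)). Qed.
Lemma Phi_arr2 a x y : Phi (vtx x) (arr s a) (vtx y) = 0.
Proof. by apply: (gm_Phi_deg H (vV s t _) (valid_arr _ _ _) (vV s t _)); rewrite orbT. Qed.
Lemma Phi_arr3 a x y : Phi (vtx x) (vtx y) (arr s a) = 0.
Proof. by apply: (gm_Phi_deg H (vV s t _) (vV s t _) (valid_arr _ _ _)); rewrite !orbT. Qed.

Lemma lact_fins f (m : qp -> k) : elt s t m -> fins (lact mul f m) /\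
  forall G, lin0 (lact mul f m) G = lin0 m (fun p => lin0 (mul (vtx f) p) G).
Proof.
move=> em; apply: (@lin0_lin _ _ _ m (fun r => mul (vtx f) r)) (elt_fins em) _ => p hp.
exact: elt_fins (gm_mul_elt H (vV s t f) (proj2 em p hp)).
Qed.
Lemma ract_fins f (m : qp -> k) : elt s t m -> fins (ract mul f m) /\
  forall G, lin0 (ract mul f m) G = lin0 m (fun p => lin0 (mul p (vtx f)) G).
Proof.
move=> em; apply: (@lin0_lin _ _ _ m (fun r => mul r (vtx f))) (elt_fins em) _ => p hp.
exact: elt_fins (gm_mul_elt H (proj2 em p hp) (vV s t f)).
Qed.

Lemma copE (x : qp -> k) u v : cop t x (u, v) = lin0 x (fun r => (count_mem (u, v) (splits t r))%:R).
Proof. by []. Qed.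

Lemma lact_inM f g h m : inM s t g h m -> inM s t (op f g) (op f h) (lact mul f m).
Proof.
move=> hm; have em := inM_elt hm; have [fl el] := lact_fins f em.
apply: arrow_char.
- split => // r /lin_nz [p [hp hr]].
  exact: proj2 (gm_mul_elt H (vV s t f) (proj2 em p hp)) r hr.
- move=> r /lin_nz [p [hp hr]]; have [a [ep _]] := inM_supp hm hp; subst p.
  by rewrite (gm_mul_deg H (vV s t f) (valid_arr _ _ a) hr).
- move=> u v; rewrite copE el.
  rewrite (lin0_ext (G2 := fun p => bas (vtx (op f g)) u * mul (vtx f) p v +
                                   mul (vtx f) p u * bas (vtx (op f h)) v)).
    by rewrite lin0_lin2.
  move=> p hp; have [a [ep [sa ta]]] := inM_supp hm hp; subst p.
  rewrite -copE (gm_mul_cop H (vV s t f) (valid_arr _ _ a)) sw2_vtx sw2_arr !(opF H) sa ta.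
  by [].
Qed.

Lemma ract_inM f g h m : inM s t g h m -> inM s t (op g f) (op h f) (ract mul f m).
Proof.
move=> hm; have em := inM_elt hm; have [fl el] := ract_fins f em.
apply: arrow_char.
- split => // r /lin_nz [p [hp hr]].
  exact: proj2 (gm_mul_elt H (proj2 em p hp) (vV s t f)) r hr.
- move=> r /lin_nz [p [hp hr]]; have [a [ep _]] := inM_supp hm hp; subst p.
  by rewrite (gm_mul_deg H (valid_arr _ _ a) (vV s t f) hr) addn0.
- move=> u v; rewrite copE el.
  rewrite (lin0_ext (G2 := fun p => bas (vtx (op g f)) u * mul p (vtx f) v +
                                   mul p (vtx f) u * bas (vtx (op h f)) v)).
    by rewrite lin0_lin2.
  move=> p hp; have [a [ep [sa ta]]] := inM_supp hm hp; subst p.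
  rewrite -copE (gm_mul_cop H (valid_arr _ _ a) (vV s t f)) sw2_arr !sw2_vtx !(opF H) sa ta.
  by [].
Qed.

Lemma mul1p p : valid s t p -> forall q, mul (vtx unit) p q = bas p q.
Proof.
move=> vp q; have e : lin (bas (vtx unit)) (fun r => mul r p) q = lin one (fun r => mul r p) q.
  by rewrite -(unitF H).
by rewrite lin_bas in e; rewrite e (gm_unitl H vp).
Qed.
Lemma mulp1 p : valid s t p -> forall q, mul p (vtx unit) q = bas p q.
Proof.
move=> vp q; have e : lin (bas (vtx unit)) (fun r => mul p r) q = lin one (fun r => mul p r) q.
  by rewrite -(unitF H).
by rewrite lin_bas in e; rewrite e (gm_unitr H vp).
Qed.

Lemma lact_unit m : elt s t m -> forall q, lact mul unit m q = m q.
Proof.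
move=> em q; rewrite -(lin0_delta q (elt_fins em)).
apply: lin0_ext => p hp; by rewrite mul1p ?(proj2 em p hp) // /bas eq_sym.
Qed.
Lemma ract_unit m : elt s t m -> forall q, ract mul unit m q = m q.
Proof.
move=> em q; rewrite -(lin0_delta q (elt_fins em)).
apply: lin0_ext => p hp; by rewrite mulp1 ?(proj2 em p hp) // /bas eq_sym.
Qed.

Lemma lact_lact e f g h m : inM s t g h m -> forall q,
  lact mul e (lact mul f m) q =
  Phi (vtx e) (vtx f) (vtx g) / Phi (vtx e) (vtx f) (vtx h) * lact mul (op e f) m q.
Proof.
move=> hm q; have em := inM_elt hm; have [fl el] := lact_fins f em.
rewrite [LHS]el -lin0_scale; apply: lin0_ext => p hp.
have [a [ep [sa ta]]] := inM_supp hm hp; subst p.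
have := gm_assoc H (vV s t e) (vV s t f) (valid_arr _ _ a) q.
rewrite !sw2_vtx !sw2_arr !Phi_arr3 !(mulr0, mul0r, addr0, add0r) (opF H) lin_bas /= sa ta => E.
apply: (mulIf (PhiV H e f h)); rewrite [RHS]mulrAC divfK ?(PhiV H) //; exact: E.
Qed.

Lemma ract_ract e f g h m : inM s t g h m -> forall q,
  ract mul f (ract mul e m) q =
  Phi (vtx h) (vtx e) (vtx f) / Phi (vtx g) (vtx e) (vtx f) * ract mul (op e f) m q.
Proof.
move=> hm q; have em := inM_elt hm; have [fl el] := ract_fins e em.
rewrite [LHS]el -lin0_scale; apply: lin0_ext => p hp.
have [a [ep [sa ta]]] := inM_supp hm hp; subst p.
have := gm_assoc H (valid_arr _ _ a) (vV s t e) (vV s t f) q.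
rewrite !sw2_arr !sw2_vtx !Phi_arr1 !(mulr0, mul0r, addr0, add0r) (opF H) lin_bas /= sa ta => E.
apply: (mulIf (PhiV H g e f)); rewrite [RHS]mulrAC divfK ?(PhiV H) // [LHS]mulrC [RHS]mulrC; exact: (esym E).
Qed.

Lemma ract_lact e f g h m : inM s t g h m -> forall q,
  ract mul f (lact mul e m) q =
  Phi (vtx e) (vtx h) (vtx f) / Phi (vtx e) (vtx g) (vtx f) * lact mul e (ract mul f m) q.
Proof.
move=> hm q; have em := inM_elt hm; have [fl el] := lact_fins e em.
have [fr er] := ract_fins f em.
rewrite [LHS]el [lact _ _ _ q]er -lin0_scale; apply: lin0_ext => p hp.
have [a [ep [sa ta]]] := inM_supp hm hp; subst p.
have := gm_assoc H (vV s t e) (valid_arr _ _ a) (vV s t f) q.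
rewrite ?sw2_vtx ?sw2_arr ?sw2_vtx ?sw2_arr ?sw2_vtx ?sw2_arr !Phi_arr2 !(mulr0, mul0r, addr0, add0r) sa ta => E.
apply: (mulIf (PhiV H e g f)); rewrite [RHS]mulrAC divfK ?(PhiV H) // [LHS]mulrC [RHS]mulrC; exact: (esym E).
Qed.
End Act.

Lemma equinum_trans (A : Type) (P Q R : A -> Prop) : equinum P Q -> equinum Q R -> equinum P R.
Proof.
move=> [f [f' [h1 [h2 [h3 h4]]]]] [g [g' [k1 [k2 [k3 k4]]]]].
exists (fun a => g (f a)), (fun c => f' (g' c)); split; last split; last split.
- by move=> a /h1 /k1.
- by move=> c /k2 /h2.
- by move=> a Pa; rewrite k3 ?h3 //; apply: h1.
- by move=> c Rc; rewrite h4 ?k4 //; apply: k2.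
Qed.

Section Fin.
Variables (k : fieldType) (V A : eqType) (s t : A -> V).
Notation qp := (qpath V A).

Lemma inM_scale g h (m : qp -> k) c : inM s t g h m -> inM s t g h (fun q => c * m q).
Proof.
have nz q : c * m q != 0 -> m q != 0 by apply: contraNneq => ->; rewrite mulr0.
case=> [[[sq hsq] hv] hm]; split; first split.
- by exists sq => p /nz /hsq.
- by move=> p /nz /hv.
- by move=> p /nz /hm.
Qed.

Lemma lin_scale (T : Type) (x : qp -> k) (F : qp -> T -> k) c q : fins x ->
  lin (fun q => c * x q) F q = c * lin x F q.
Proof.
move=> fx; rewrite (@linE _ _ _ _ _ _ (sup x)) ?undup_uniq //.
- by rewrite /lin big_distrr /=; apply: eq_bigr => p _; rewrite mulrA.
- by case: fx => sq hsq; exists sq => p hp; apply: hsq; apply: contraNneq hp => ->; rewrite mulr0.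
- by move=> p hp; apply: supP fx _ _; apply: contraNneq hp => ->; rewrite mulr0.
Qed.

Lemma bas_inM a : inM s t (t a) (s a) (bas (arr s a) : qp -> k).
Proof.
have e r : (bas (arr s a) r : k) != 0 -> r = arr s a.
  by rewrite /bas; case: (eqVneq r (arr s a)) => [->|_] //; rewrite mulr0n eqxx.
split; first split.
- exact: fins_bas.
- by move=> r /e ->; apply: valid_arr.
- by move=> r /e ->; exists a.
Qed.

Lemma bas_arr a a' : (bas (arr s a) (arr s a') : k) = (a == a')%:R.
Proof.
rewrite /bas; congr (_%:R); congr (nat_of_bool _).
by apply/idP/idP => [/eqP/arr_inj ->|/eqP ->].
Qed.

Lemma equinum_act (L L' : (qp -> k) -> qp -> k) G0 H0 G1 H1 cF cG :
  cF != 0 -> cG != 0 ->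
  (forall m, inM s t G0 H0 m -> inM s t G1 H1 (L m)) ->
  (forall m, inM s t G1 H1 m -> inM s t G0 H0 (L' m)) ->
  (forall m, inM s t G0 H0 m -> forall q, L' (L m) q = cF * m q) ->
  (forall m, inM s t G1 H1 m -> forall q, L (L' m) q = cG * m q) ->
  (forall y, elt s t y -> forall q, L y q = lin0 y (fun r => L (bas r) q)) ->
  (forall y, elt s t y -> forall q, L' y q = lin0 y (fun r => L' (bas r) q)) ->
  equinum (fun a => s a = H0 /\ t a = G0) (fun a => s a = H1 /\ t a = G1).
Proof.
move=> hcF hcG hL hL' hLL hLL' linL linL'.
have bP a : s a = H0 /\ t a = G0 -> inM s t G0 H0 (bas (arr s a) : qp -> k).
  by case=> <- <-; exact: bas_inM.
have bQ a : s a = H1 /\ t a = G1 -> inM s t G1 H1 (bas (arr s a) : qp -> k).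
  by case=> <- <-; exact: bas_inM.
have supl (G H : V) (y : qp -> k) : inM s t G H y -> exists l : seq A, forall b, y (arr s b) != 0 -> b \in l.
  case=> [[[sq hsq] _] _]; exists (flatten [seq p.2 | p <- sq]) => b /hsq hb.
  by apply/flattenP; exists [:: b]; [apply/mapP; exists (arr s b)|rewrite inE].
have supQ (G H : V) (y : qp -> k) b : inM s t G H y -> y (arr s b) != 0 -> s b = H /\ t b = G.
  by move=> hy /(inM_supp hy) [a' [/arr_inj -> ha']].
have sumE (G H : V) (y : qp -> k) (l : seq A) (M : (qp -> k) -> qp -> k) q :
    inM s t G H y -> uniq l -> (forall b, y (arr s b) != 0 -> b \in l) ->
    (forall y, elt s t y -> forall q, M y q = lin0 y (fun r => M (bas r) q)) ->
    \sum_(b <- l) y (arr s b) * M (bas (arr s b)) q = M y q.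
  move=> hy ul hl hM; rewrite (hM y (inM_elt hy)) (@lin0E _ _ _ _ _ [seq arr s b | b <- l]).
  - by rewrite big_map.
  - exact: elt_fins (inM_elt hy).
  - by rewrite map_inj_uniq // => a1 a2; apply: arr_inj.
  - move=> r hr; have [b [er _]] := inM_supp hy hr; subst r; apply/mapP; exists b => //.
    exact: hl.
apply: (iso_equinum (F := fun a b => L (bas (arr s a)) (arr s b))
                    (G := fun b a => L' (bas (arr s b)) (arr s a)) hcF hcG).
- by move=> a /bP /hL /supl.
- by move=> a b /bP /hL /supQ; apply.
- by move=> b /bQ /hL' /supl.
- by move=> b a /bQ /hL' /supQ; apply.
- move=> a a' Pa Pa' l ul hl; rewrite (sumE _ _ _ _ _ _ (hL _ (bP _ Pa)) ul hl linL').
  by rewrite hLL; [congr (_ * _); exact: bas_arr|exact: bP].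
- move=> b b' Qb Qb' l ul hl; rewrite (sumE _ _ _ _ _ _ (hL' _ (bQ _ Qb)) ul hl linL).
  by rewrite hLL'; [congr (_ * _); exact: bas_arr|exact: bQ].
Qed.
End Fin.

Section Surj.
Variables (k : fieldType) (V A : eqType) (s t : A -> V)
  (mul : qpath V A -> qpath V A -> qpath V A -> k) (one : qpath V A -> k)
  (Phi Phinv : qpath V A -> qpath V A -> qpath V A -> k)
  (S : qpath V A -> qpath V A -> k) (alpha beta : qpath V A -> k).
Hypothesis H : graded_majid s t mul one Phi Phinv S alpha beta.
Notation qp := (qpath V A).
Notation op := (op H). Notation unit := (unit H). Notation inv := (inv H).

Lemma rat_nz a b c d e f : Phi (vtx a) (vtx b) (vtx c) / Phi (vtx d) (vtx e) (vtx f) != 0.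
Proof. by rewrite mulf_neq0 ?invr_eq0 ?(PhiV H). Qed.

Lemma lact_surj f g h (m' : qp -> k) : inM s t (op f g) (op f h) m' ->
  exists m, inM s t g h m /\ lact mul f m =1 m'.
Proof.
move=> hm'.
set r := Phi (vtx f) (vtx (inv f)) (vtx (op f g)) / Phi (vtx f) (vtx (inv f)) (vtx (op f h)).
have rnz : r != 0 by apply: rat_nz.
have h1 := lact_inM H (inv f) hm'; rewrite -!(opA H) !(opVx H) !(op1x H) in h1.
exists (fun q => r^-1 * lact mul (inv f) m' q); split; first exact: inM_scale.
move=> q; rewrite {1}/lact lin_scale; last exact: elt_fins (inM_elt h1).
change (r^-1 * lact mul f (lact mul (inv f) m') q = m' q).
by rewrite (lact_lact H f (inv f) hm') -/r (opxV H) (lact_unit H (inM_elt hm')) mulrA mulVf // mul1r.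
Qed.

Lemma ract_surj f g h (m' : qp -> k) : inM s t (op g f) (op h f) m' ->
  exists m, inM s t g h m /\ ract mul f m =1 m'.
Proof.
move=> hm'.
set r := Phi (vtx (op h f)) (vtx (inv f)) (vtx f) / Phi (vtx (op g f)) (vtx (inv f)) (vtx f).
have rnz : r != 0 by apply: rat_nz.
have h1 := ract_inM H (inv f) hm'; rewrite !(opA H) !(opxV H) !(opx1 H) in h1.
exists (fun q => r^-1 * ract mul (inv f) m' q); split; first exact: inM_scale.
move=> q; rewrite {1}/ract lin_scale; last exact: elt_fins (inM_elt h1).
change (r^-1 * ract mul f (ract mul (inv f) m') q = m' q).
by rewrite (ract_ract H (inv f) f hm') -/r (opVx H) (ract_unit H (inM_elt hm')) mulrA mulVf // mul1r.
Qed.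

Lemma equinum_lact f G0 H0 :
  equinum (fun a => s a = H0 /\ t a = G0) (fun a => s a = op f H0 /\ t a = op f G0).
Proof.
apply: (@equinum_act k V A s t (lact mul f) (lact mul (inv f)) G0 H0 (op f G0) (op f H0)
  (Phi (vtx (inv f)) (vtx f) (vtx G0) / Phi (vtx (inv f)) (vtx f) (vtx H0))
  (Phi (vtx f) (vtx (inv f)) (vtx (op f G0)) / Phi (vtx f) (vtx (inv f)) (vtx (op f H0)))).
- exact: rat_nz.
- exact: rat_nz.
- by move=> m hm; apply: lact_inM.
- move=> m hm; have := lact_inM H (inv f) hm.
  by rewrite -!(opA H) !(opVx H) !(op1x H).
- move=> m hm q; rewrite (lact_lact H (inv f) f hm) (opVx H) (lact_unit H (inM_elt hm)) //.
- move=> m hm q; rewrite (lact_lact H f (inv f) hm) (opxV H) (lact_unit H (inM_elt hm)) //.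
- move=> y _ q; transitivity (lin0 y (fun r => mul (vtx f) r q)); first by [].
  by apply: lin0_ext => r _; rewrite /lact lin_bas.
- move=> y _ q; transitivity (lin0 y (fun r => mul (vtx (inv f)) r q)); first by [].
  by apply: lin0_ext => r _; rewrite /lact lin_bas.
Qed.

Lemma equinum_ract f G0 H0 :
  equinum (fun a => s a = H0 /\ t a = G0) (fun a => s a = op H0 f /\ t a = op G0 f).
Proof.
apply: (@equinum_act k V A s t (ract mul f) (ract mul (inv f)) G0 H0 (op G0 f) (op H0 f)
  (Phi (vtx H0) (vtx f) (vtx (inv f)) / Phi (vtx G0) (vtx f) (vtx (inv f)))
  (Phi (vtx (op H0 f)) (vtx (inv f)) (vtx f) / Phi (vtx (op G0 f)) (vtx (inv f)) (vtx f))).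
- exact: rat_nz.
- exact: rat_nz.
- by move=> m hm; apply: ract_inM.
- move=> m hm; have := ract_inM H (inv f) hm.
  by rewrite !(opA H) !(opxV H) !(opx1 H).
- move=> m hm q; rewrite (ract_ract H f (inv f) hm) (opxV H) (ract_unit H (inM_elt hm)) //.
- move=> m hm q; rewrite (ract_ract H (inv f) f hm) (opVx H) (ract_unit H (inM_elt hm)) //.
- move=> y _ q; transitivity (lin0 y (fun r => mul r (vtx f) q)); first by [].
  by apply: lin0_ext => r _; rewrite /ract lin_bas.
- move=> y _ q; transitivity (lin0 y (fun r => mul r (vtx (inv f)) q)); first by [].
  by apply: lin0_ext => r _; rewrite /ract lin_bas.
Qed.
End Surj.

Theorem mainTheorem2 (k : fieldType) (V A : eqType) (s t : A -> V)
  (mul : qpath V A -> qpath V A -> qpath V A -> k) (one : qpath V A -> k)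
  (Phi Phinv : qpath V A -> qpath V A -> qpath V A -> k)
  (S : qpath V A -> qpath V A -> k) (alpha beta : qpath V A -> k) :
  graded_majid s t mul one Phi Phinv S alpha beta ->
  exists (op : V -> V -> V) (u : V) (inv : V -> V),
    (* M(Q0 (x) Q0) in Q0, 1 is a vertex, S(g) is a vertex *)
    (forall g h, mul (vtx g) (vtx h) =1 bas (vtx (op g h))) /\
    one =1 bas (vtx u) /\
    (forall g, S (vtx g) =1 bas (vtx (inv g))) /\
    (* (Q0, op) is a group with identity 1 and inverse S *)
    (forall x y z, op (op x y) z = op x (op y z)) /\
    (forall x, op u x = x /\ op x u = x) /\
    (forall x, op (inv x) x = u /\ op x (inv x) = u) /\
    (* f . gM^h = fgM^fh  and  gM^h . f = gfM^hf *)
    (forall f g h m, inM s t g h m -> inM s t (op f g) (op f h) (lact mul f m)) /\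
    (forall f g h m', inM s t (op f g) (op f h) m' ->
       exists m, inM s t g h m /\ lact mul f m =1 m') /\
    (forall f g h m, inM s t g h m -> inM s t (op g f) (op h f) (ract mul f m)) /\
    (forall f g h m', inM s t (op g f) (op h f) m' ->
       exists m, inM s t g h m /\ ract mul f m =1 m') /\
    (* quasi-bimodule identities *)
    (forall e f g h m, inM s t g h m -> forall q,
       lact mul e (lact mul f m) q =
       Phi (vtx e) (vtx f) (vtx g) / Phi (vtx e) (vtx f) (vtx h) * lact mul (op e f) m q) /\
    (forall e f g h m, inM s t g h m -> forall q,
       ract mul f (ract mul e m) q =
       Phi (vtx h) (vtx e) (vtx f) / Phi (vtx g) (vtx e) (vtx f) * ract mul (op e f) m q) /\
    (forall e f g h m, inM s t g h m -> forall q,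
       ract mul f (lact mul e m) q =
       Phi (vtx e) (vtx h) (vtx f) / Phi (vtx e) (vtx g) (vtx f) * lact mul e (ract mul f m) q) /\
    (* #arrows x -> g^-1 c g x  =  #arrows 1 -> c *)
    (forall x g c,
       equinum (fun a => s a = x /\ t a = op (op (op (inv g) c) g) x)
               (fun a => s a = u /\ t a = c)).
Proof.
move=> H; exists (op H), (unit H), (inv H).
split; first exact: (opP H).
split; first exact: (unitP H).
split; first exact: (invP H).
split; first exact: (opA H).
split; first by move=> x; split; [exact: (op1x H)|exact: (opx1 H)].
split; first by move=> x; split; [exact: (opVx H)|exact: (opxV H)].
split; first by move=> f g h m; apply: lact_inM.
split; first by move=> f g h m'; apply: lact_surj.
split; first by move=> f g h m; apply: ract_inM.
split; first by move=> f g h m'; apply: ract_surj.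
split; first by move=> e f g h m hm q; exact: (lact_lact H e f hm q).
split; first by move=> e f g h m hm q; exact: (ract_ract H e f hm q).
split; first by move=> e f g h m hm q; exact: (ract_lact H e f hm q).
move=> x g c.
set y := op H (op H (inv H g) c) g.
have E1 := equinum_ract H (inv H x) (op H y x) x.
rewrite (opxV H) (opA H) (opxV H) (opx1 H) in E1.
have E2 := equinum_lact H g y (unit H).
rewrite (opx1 H) /y -!(opA H) (opxV H) (op1x H) in E2.
have E3 := equinum_ract H (inv H g) (op H c g) g.
rewrite (opxV H) (opA H) (opxV H) (opx1 H) in E3.
exact: equinum_trans (equinum_trans E1 E2) E3.
Qed.
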